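(* Consider the reaction–diffusion system on $\Omega=[0,\pi]$ with homogeneous Neumann boundary conditions, $$\partial_t f=d_1\Delta f+r\alpha f m(1-f-m)-(1+h)f,\qquad \partial_t m=d_2\Delta m+(1-r)\alpha f m(1-f-m)+(s-1)m,$$ with $0<r<1$, $\alpha>0$, $h\ge0$, $0\le s<1$, $d_1,d_2>0$. At every positive spatially homogeneous steady state $(f^*,m^* )$, the Jacobian $J=(J_{ij})$ of the reaction terms satisfies $J_{11}<0$ and $J_{22}<0$. Consequently, for no choice of $d_1,d_2>0$ do the Turing instability conditions $$J_{11}+J_{22}<0,\quad J_{11}J_{22}-J_{12}J_{21}>0,\quad d_2J_{11}+d_1J_{22}>0,\quad (d_2J_{11}+d_1J_{22})^2-4d_1d_2(J_{11}J_{22}-J_{12}J_{21})>0$$ hold, i.e. the system exhibits no Turing (diffusion-driven) instability.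
   Context: Spatially explicit FHMS mating model without Allee effect; $f,m$ are scaled female/male densities, $r$ primary sex ratio, $h$ scaled harvesting rate, $s$ scaled stocking rate, $d_1,d_2$ diffusion coefficients. *)

(* Defs.v *)
From Stdlib Require Import Reals.
From Coquelicot Require Import Coquelicot.
Open Scope R_scope.

Definition reacF (r alpha h : R) (f m : R) : R :=
  r * alpha * f * m * (1 - f - m) - (1 + h) * f.

Definition reacG (r alpha s : R) (f m : R) : R :=
  (1 - r) * alpha * f * m * (1 - f - m) + (s - 1) * m.

Definition J11 r alpha h (f m : R) : R := Derive (fun x => reacF r alpha h x m) f.
Definition J12 r alpha h (f m : R) : R := Derive (fun y => reacF r alpha h f y) m.
Definition J21 r alpha s (f m : R) : R := Derive (fun x => reacG r alpha s x m) f.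
Definition J22 r alpha s (f m : R) : R := Derive (fun y => reacG r alpha s f y) m.

Definition turing_conditions (a b c d d1 d2 : R) : Prop :=
  a + d < 0 /\ a * d - b * c > 0 /\ d2 * a + d1 * d > 0 /\
  (d2 * a + d1 * d) ^ 2 - 4 * d1 * d2 * (a * d - b * c) > 0.

(* Main.v *)
Require Import Defs.
From Stdlib Require Import Reals Lra Psatz.
From Coquelicot Require Import Coquelicot.
Open Scope R_scope.

Lemma J11_val r alpha h f m :
  J11 r alpha h f m = r*alpha*m*(1-f-m) - r*alpha*f*m - (1+h).
Proof.
  unfold J11, reacF. apply is_derive_unique. auto_derive; auto. ring.
Qed.

Lemma J22_val r alpha s f m :
  J22 r alpha s f m = (1-r)*alpha*f*(1-f-m) - (1-r)*alpha*f*m + (s-1).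
Proof.
  unfold J22, reacG. apply is_derive_unique. auto_derive; auto. ring.
Qed.

Theorem mainTheorem10 (r alpha h s : R) :
  0 < r < 1 -> 0 < alpha -> 0 <= h -> 0 <= s < 1 ->
  forall fs ms : R, 0 < fs -> 0 < ms ->
  reacF r alpha h fs ms = 0 -> reacG r alpha s fs ms = 0 ->
  J11 r alpha h fs ms < 0 /\ J22 r alpha s fs ms < 0 /\
  (forall d1 d2 : R, 0 < d1 -> 0 < d2 ->
     ~ turing_conditions (J11 r alpha h fs ms) (J12 r alpha h fs ms)
                         (J21 r alpha s fs ms) (J22 r alpha s fs ms) d1 d2).
Proof.
  intros Hr Ha Hh Hs fs ms Hf Hm HF HG.
  unfold reacF, reacG in HF, HG.
  assert (E1 : r*alpha*ms*(1-fs-ms) = 1+h).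
  { apply (Rmult_eq_reg_l fs); [|lra]. lra. }
  assert (E2 : (1-r)*alpha*fs*(1-fs-ms) = 1-s).
  { apply (Rmult_eq_reg_l ms); [|lra]. lra. }
  assert (A : J11 r alpha h fs ms < 0).
  { rewrite J11_val, E1. assert (0 < r*alpha*fs*ms).
    { repeat apply Rmult_lt_0_compat; lra. } lra. }
  assert (B : J22 r alpha s fs ms < 0).
  { rewrite J22_val, E2. assert (0 < (1-r)*alpha*fs*ms).
    { repeat apply Rmult_lt_0_compat; lra. } lra. }
  split; [exact A|split; [exact B|]].
  intros d1 d2 H1 H2 [_ [_ [C _]]].
  assert (d2 * J11 r alpha h fs ms < 0) by (apply Rmult_pos_neg; auto).
  assert (d1 * J22 r alpha s fs ms < 0) by (apply Rmult_pos_neg; auto).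
  lra.
Qed.
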